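(* Let $K\subset\mathbb{R}^n$ be a closed convex set with diameter $d$ and $\sigma>0$. Then $\varepsilon^*\gtrsim\sigma\wedge d$.
   Context: $M(\eta,T)$ is the maximal cardinality of a subset of $T$ with pairwise Euclidean distances $>\eta$; the local entropy is $\log M^{\mathrm{loc}}(\varepsilon)$ with $M^{\mathrm{loc}}(\varepsilon)=\sup_{\theta\in K}M(\varepsilon/c^*,B(\theta,\varepsilon)\cap K)$, where $B$ is the closed Euclidean ball and $c^*$ is a sufficiently large absolute constant. $\varepsilon^*=\sup\{\varepsilon:\varepsilon^2/\sigma^2\le\log M^{\mathrm{loc}}(\varepsilon)\}$ (its square is up to constants the minimax risk for estimating $\mu\in K$ from $Y=\mu+\xi$, $\xi\sim N(0,\sigma^2\mathbb{I}_n)$). $\gtrsim$ hides an absolute constant. *)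

(* Defs.v *)
From HB Require Import structures.
From mathcomp Require Import all_boot all_order all_algebra.
From mathcomp Require Import all_classical all_reals all_analysis.
Set Implicit Arguments. Unset Strict Implicit. Unset Printing Implicit Defensive.
Import Order.TTheory GRing.Theory Num.Theory.
Import numFieldNormedType.Exports.
Local Open Scope classical_set_scope.
Local Open Scope ring_scope.

Section Defs.
Variables (R : realType) (n : nat).
Notation V := 'rV[R]_n.

Definition edist (x y : V) : R := Num.sqrt (\sum_(i < n) (x ord0 i - y ord0 i) ^+ 2).

Definition eball (th : V) (r : R) : set V := [set x | edist th x <= r].

Definition diam (K : set V) : \bar R :=
  ereal_sup [set (edist x y)%:E | x in K & y in K].

Definition is_packing (eta : R) (T : set V) (s : seq V) : Prop :=
  uniq s /\ (forall x, x \in s -> T x) /\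
  (forall x y, x \in s -> y \in s -> x != y -> eta < edist x y).

Definition packM (eta : R) (T : set V) : \bar R :=
  ereal_sup [set ((size s)%:R)%:E | s in is_packing eta T].

Definition Mloc (cstar : R) (K : set V) (eps : R) : \bar R :=
  ereal_sup [set packM (eps / cstar) (eball th eps `&` K) | th in K].

End Defs.

Definition elog {R : realType} (x : \bar R) : \bar R :=
  match x with
  | EFin r => (ln r)%:E
  | +oo%E => +oo%E
  | -oo%E => -oo%E
  end.

Definition eps_star {R : realType} {n : nat} (cstar : R) (K : set 'rV[R]_n)
  (sigma : R) : \bar R :=
  ereal_sup [set eps%:E | eps in
    [set eps : R | 0 <= eps /\ ((eps ^+ 2 / sigma ^+ 2)%:E <= elog (Mloc cstar K eps))%E]].

(* Main.v *)
Require Import Defs.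
From HB Require Import structures.
From mathcomp Require Import all_boot all_order all_algebra.
From mathcomp Require Import all_classical all_reals all_analysis.
From mathcomp Require Import ring lra.
Import Order.TTheory GRing.Theory Num.Theory.
Import numFieldNormedType.Exports.
Local Open Scope classical_set_scope.
Local Open Scope ring_scope.
Local Open Scope convex_scope.

Local Notation edist := Defs.edist.
Section Helpers.
Variables (R : realType) (n : nat).
Notation V := 'rV[R]_n.

Lemma edistxx (x : V) : edist x x = 0.
Proof.
rewrite /edist big1 ?sqrtr0 // => i _; by rewrite subrr expr0n.
Qed.

Lemma edistC (x y : V) : edist x y = edist y x.
Proof.
rewrite /edist; congr Num.sqrt; apply: eq_bigr => i _.
by rewrite -sqrrN opprB.
Qed.

Lemma edist_ge0 (x y : V) : 0 <= edist x y.
Proof. exact: sqrtr_ge0. Qed.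

Lemma edist_conv (x y : V) (l : R) : 0 <= l ->
  edist x (l *: y + (1 - l) *: x) = l * edist x y.
Proof.
move=> l0; rewrite /edist.
have -> : \sum_(i < n) (x ord0 i - (l *: y + (1 - l) *: x) ord0 i) ^+ 2 =
          l ^+ 2 * \sum_(i < n) (x ord0 i - y ord0 i) ^+ 2.
  rewrite mulr_sumr; apply: eq_bigr => i _; rewrite !mxE.
  rewrite -exprMn; congr (_ ^+ 2); ring.
rewrite sqrtrM ?sqr_ge0 // sqrtr_sqr ger0_norm //.
Qed.

End Helpers.

Lemma packM_ge {R : realType} {n : nat} (eta : R) (T : set 'rV[R]_n) s :
  is_packing eta T s -> (((size s)%:R)%:E <= packM eta T)%E.
Proof. by move=> h; apply: ereal_sup_ubound; exists s. Qed.

Lemma Mloc_ge {R : realType} {n : nat} cstar (K : set 'rV[R]_n) eps th s :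
  K th -> is_packing (eps / cstar) (eball th eps `&` K) s ->
  (((size s)%:R)%:E <= Mloc cstar K eps)%E.
Proof.
move=> Kth hs; have h1 := @packM_ge _ _ _ _ _ hs. apply: (le_trans h1).
by apply: ereal_sup_ubound; exists th.
Qed.

Lemma Mloc_ge1 {R : realType} {n : nat} cstar (K : set 'rV[R]_n) eps th :
  K th -> 0 <= eps -> (1%:E <= Mloc cstar K eps)%E.
Proof.
move=> Kth e0; have := @Mloc_ge R n cstar K eps th [:: th] Kth; apply.
split; first by [].
split.
  move=> x; rewrite inE => /eqP ->; split => //.
  by rewrite /eball /= edistxx.
by move=> x y; rewrite !inE => /eqP -> /eqP ->; rewrite eqxx.
Qed.

Lemma Mloc_ge2 {R : realType} {n : nat} cstar (K : set 'rV[R]_n) eps x z :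
  K x -> K z -> edist x z = eps -> 0 < eps -> 1 < cstar ->
  (2%:E <= Mloc cstar K eps)%E.
Proof.
move=> Kx Kz dxz e0 c1.
have ltd : eps / cstar < eps.
  by rewrite ltr_pdivrMr ?(lt_trans ltr01) // ltr_pMr.
have xz : x != z.
  by apply/eqP => exz; move: dxz; rewrite exz edistxx => h; move: e0; rewrite -h ltxx.
have := @Mloc_ge R n cstar K eps x [:: x; z] Kx; apply.
split; first by rewrite /= inE xz.
split.
  move=> y; rewrite !inE => /orP [] /eqP ->; split => //; rewrite /eball /=.
    by rewrite edistxx ltW.
  by rewrite dxz.
move=> a b; rewrite !inE => /orP [] /eqP -> /orP [] /eqP ->; rewrite ?eqxx //.
  by move=> _; rewrite dxz.
by move=> _; rewrite edistC dxz.
Qed.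

Lemma elog_ge {R : realType} (a : R) (M : \bar R) :
  0 < a -> (a%:E <= M)%E -> ((ln a)%:E <= elog M)%E.
Proof.
case: M => [r| |] a0 /= ar.
- rewrite lee_fin in ar; rewrite lee_fin ler_ln // ?posrE // (lt_le_trans a0) //.
- exact: leey.
- by rewrite leeNy_eq in ar.
Qed.

Lemma eps_star_ge {R : realType} {n : nat} cstar (K : set 'rV[R]_n) sigma eps :
  0 <= eps -> ((eps ^+ 2 / sigma ^+ 2)%:E <= elog (Mloc cstar K eps))%E ->
  (eps%:E <= eps_star cstar K sigma)%E.
Proof. by move=> e0 h; apply: ereal_sup_ubound; exists eps. Qed.

Lemma ln2_ge (R : realType) : 1 / 4 <= ln (2 : R).
Proof.
have h := @le_ln1Dx R (- (1/2)).
have e : 1 + - (1 / 2) = (2 : R)^-1 by field.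
rewrite e lnV ?posrE // in h.
have : -1 < - (1 / 2 : R) by lra.
move=> /h; lra.
Qed.

Lemma key {R : realType} {n : nat} (cstar : R) (K : set 'rV[R]_n) sigma eps x y :
  1 < cstar -> 0 < sigma -> 0 < eps -> eps <= sigma / 2 -> convex_set K ->
  K x -> K y -> eps <= edist x y -> (eps%:E <= eps_star cstar K sigma)%E.
Proof.
move=> c1 s0 e0 es cK Kx Ky eD.
set D := edist x y in eD.
have D0 : 0 < D by apply: lt_le_trans eD.
have l0 : 0 <= eps / D by rewrite divr_ge0 // ltW.
have l1 : eps / D <= 1 by rewrite ler_pdivrMr // mul1r.
pose lam : {i01 R} := Itv01 l0 l1.
have Kz := cK y x lam (mem_set Ky) (mem_set Kx).
have {}Kz : K ((eps / D) *: y + (1 - eps / D) *: x) := set_mem Kz.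
have dz : edist x ((eps / D) *: y + (1 - eps / D) *: x) = eps.
  by rewrite edist_conv // -/D mulrVK // unitfE gt_eqF.
have M2 := @Mloc_ge2 _ _ cstar K eps _ _ Kx Kz dz e0 c1.
apply: eps_star_ge; first exact: ltW.
have two0 : (0 : R) < 2 by [].
have E2 := @elog_ge _ 2 _ two0 M2. apply: (le_trans _ E2).
rewrite lee_fin; apply: (le_trans _ (ln2_ge R)).
rewrite ler_pdivrMr ?exprn_gt0 //.
have : 0 <= eps <= sigma / 2 by rewrite es ltW.
nra.
Qed.

Theorem mainTheorem14 (R : realType) :
  exists c0 : R, 0 < c0 /\ exists cbar : R, 0 < cbar /\
  forall (cstar : R), cbar <= cstar ->
  forall (n : nat) (K : set 'rV[R]_n) (sigma : R),
    K !=set0 -> closed K -> convex_set K -> 0 < sigma ->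
    (c0%:E * Order.min sigma%:E (diam K) <= eps_star cstar K sigma)%E.
Proof.
exists (1/2); split; first by [].
exists 2; split; first by [].
move=> cstar c2 n K sigma [th Kth] _ cK s0.
have c1 : 1 < cstar by lra.
have diam0 : (0 <= diam K)%E.
  apply: ereal_sup_ubound; exists th => //; exists th => //.
  by rewrite edistxx.
have es0 : (0%:E <= eps_star cstar K sigma)%E.
  apply: eps_star_ge => //.
  have M1 := @Mloc_ge1 _ _ cstar K 0 th Kth (lexx 0).
  have E1 := @elog_ge _ 1 _ ltr01 M1.
  rewrite ln1 in E1; apply: (le_trans _ E1).
  by rewrite expr0n /= mul0r.
have getpt : forall r : R, (r%:E < diam K)%E ->
    exists a b, K a /\ K b /\ r < edist a b.
  move=> r /ereal_sup_gt [_ [a Ka [b Kb <-]]].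
  by rewrite lte_fin => h; exists a, b.
case hd : (diam K) => [D| |].
- rewrite -EFin_min -EFinM.
  rewrite hd lee_fin in diam0.
  have [D00|D0] := eqVneq D 0.
    by rewrite D00 min_r ?(ltW s0) // mulr0.
  have Dp : 0 < D by rewrite lt_neqAle eq_sym D0 diam0.
  have hD : ((D / 2)%:E < diam K)%E by rewrite hd lte_fin; lra.
  have [a [b [Ka [Kb hab]]]] := getpt _ hD.
  apply: (@key _ _ cstar K sigma _ a b) => //.
  + by rewrite mulr_gt0 // lt_min s0 Dp.
  + have : Num.min sigma D <= sigma by rewrite ge_min lexx.
    lra.
  + have : Num.min sigma D <= D by rewrite ge_min lexx orbT.
    lra.
- rewrite min_l ?leey // -EFinM.
  have hD : ((sigma / 2)%:E < diam K)%E by rewrite hd ltey.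
  have [a [b [Ka [Kb hab]]]] := getpt _ hD.
  apply: (@key _ _ cstar K sigma _ a b) => //.
  + lra.
  + lra.
  + lra.
- by move: diam0; rewrite hd leeNy_eq.
Qed.
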